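(* Let $X\subseteq\mathbb{R}^n$ be nonempty, closed, convex and bounded; let $F:X\to\mathbb{R}^n$ be $L_F$-Lipschitz and monotone on $X$; let $H:X\to\mathbb{R}^n$ be $L_H$-Lipschitz and $\mu_H$-strongly monotone on $X$; assume $\mathrm{SOL}(X,F)\neq\emptyset$. Let $\gamma>0$ and let $\{\eta_k\}$ be a nonincreasing positive sequence with $\gamma^2L_F^2+\gamma\eta_k\mu_H+\gamma^2\eta_k^2L_H^2\le0.5$ for all $k\ge0$. Let $x_0,\bar y_0\in X$, $\Gamma_0=0$, $\theta_0=\frac1{1-\gamma\eta_0\mu_H}$ and for $k\ge0$: $y_{k+1}=\Pi_X[x_k-\gamma(F(x_k)+\eta_kH(x_k))]$, $x_{k+1}=\Pi_X[x_k-\gamma(F(y_{k+1})+\eta_kH(y_{k+1}))]$, $\Gamma_{k+1}=\Gamma_k+\eta_k\theta_k$, $\bar y_{k+1}=\frac{\Gamma_k\bar y_k+\eta_k\theta_ky_{k+1}}{\Gamma_{k+1}}$, $\theta_{k+1}=\frac{\theta_k}{1-\gamma\eta_{k+1}\mu_H}$. Then: (i) For all $K\ge1$, $-B_H\,\mathrm{dist}(\bar y_K,\mathrm{SOL}(X,F))\le\mathrm{Gap}(\bar y_K,\mathrm{SOL}(X,F),H)\le\gamma^{-1}D_X^2\big/\sum_{j=0}^{K-1}\eta_j\theta_j$. (ii) For all $K\ge1$, $0\le\mathrm{Gap}(\bar y_K,X,F)\le\left(\gamma^{-1}\eta_0D_X^2+C_H\sqrt2\,D_X\sum_{j=0}^{K-1}\eta_j^2\theta_j\right)\big/\sum_{j=0}^{K-1}\eta_j\theta_j$.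 (iii) If $\sum_{j=0}^\infty\eta_j\theta_j=\infty$ and $\lim_{k\to\infty}\sum_{j=0}^k\eta_j^2\theta_j\big/\sum_{j=0}^k\eta_j\theta_j=0$, then $\{\bar y_k\}$ converges to the unique solution of the bilevel VI, i.e., the unique point of $\mathrm{SOL}(\mathrm{SOL}(X,F),H)$.
   Context: $\mathrm{SOL}(Y,G)=\{x\in Y: G(x)^\top(y-x)\ge0\ \forall y\in Y\}$. $\mathrm{Gap}(x,Y,G)=\sup_{y\in Y}G(y)^\top(x-y)$. $\Pi_X$ Euclidean projection; $\mathrm{dist}(x,Y)=\|x-\Pi_Y[x]\|$. $D_X^2=\sup_{x,y\in X}\frac12\|x-y\|^2$, $B_H=\sup_{x\in\mathrm{SOL}(X,F)}\|H(x)\|$, $C_H=\sup_{x\in X}\|H(x)\|$. $H$ is $\mu_H$-strongly monotone if $(H(x)-H(y))^\top(x-y)\ge\mu_H\|x-y\|^2$, $\mu_H>0$. *)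

(* Defs.v *)
From HB Require Import structures.
From mathcomp Require Import all_boot all_order all_algebra.
From mathcomp Require Import all_classical all_reals all_analysis.
Set Implicit Arguments. Unset Strict Implicit. Unset Printing Implicit Defensive.
Import Order.TTheory GRing.Theory Num.Theory.
Import numFieldNormedType.Exports.
Local Open Scope classical_set_scope.
Local Open Scope ring_scope.

Section Defs.
Context {R : realType} {n : nat}.
Notation vec := 'rV[R]_n.

Definition dot (u v : vec) : R := \sum_(i < n) u ord0 i * v ord0 i.
Definition enorm (u : vec) : R := Num.sqrt (dot u u).

Definition vi_convex_set (X : set vec) : Prop :=
  forall x y t, X x -> X y -> 0 <= t -> t <= 1 -> X (t *: x + (1 - t) *: y).
Definition vi_bounded_set (X : set vec) : Prop :=
  exists M : R, forall x, X x -> enorm x <= M.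

Definition vi_lipschitz_on (X : set vec) (G : vec -> vec) (L : R) : Prop :=
  forall x y, X x -> X y -> enorm (G x - G y) <= L * enorm (x - y).
Definition vi_monotone_on (X : set vec) (G : vec -> vec) : Prop :=
  forall x y, X x -> X y -> 0 <= dot (G x - G y) (x - y).
Definition vi_strongly_monotone_on (X : set vec) (G : vec -> vec) (mu : R) : Prop :=
  forall x y, X x -> X y -> mu * enorm (x - y) ^+ 2 <= dot (G x - G y) (x - y).

Definition is_proj (X : set vec) (x p : vec) : Prop :=
  X p /\ forall y, X y -> enorm (x - p) <= enorm (x - y).

Definition SOL (Y : set vec) (G : vec -> vec) : set vec :=
  [set x | Y x /\ forall y, Y y -> 0 <= dot (G x) (y - x)].

Definition Gap (x : vec) (Y : set vec) (G : vec -> vec) : R :=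
  sup [set dot (G y) (x - y) | y in Y].

Definition dist (x : vec) (Y : set vec) : R :=
  inf [set enorm (x - y) | y in Y].

Definition DX2 (X : set vec) : R :=
  sup [set enorm (x - y) ^+ 2 / 2 | x in X & y in X].
Definition DX (X : set vec) : R := Num.sqrt (DX2 X).
Definition BH (X : set vec) (F H : vec -> vec) : R :=
  sup [set enorm (H x) | x in SOL X F].
Definition CH (X : set vec) (H : vec -> vec) : R :=
  sup [set enorm (H x) | x in X].
End Defs.

(* Main.v *)
Require Import Defs.
From HB Require Import structures.
From mathcomp Require Import all_boot all_order all_algebra.
From mathcomp Require Import all_classical all_reals all_analysis.
From mathcomp Require Import ring lra.
Import Order.TTheory GRing.Theory Num.Theory.
Import numFieldNormedType.Exports.
Local Open Scope classical_set_scope.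
Local Open Scope ring_scope.

Section DotLemmas.
Context {R : realType} {n : nat}.
Implicit Types (u v w : 'rV[R]_n).

Lemma dotC u v : dot u v = dot v u.
Proof. by rewrite /dot; apply: eq_bigr => i _; rewrite mulrC. Qed.

Lemma dotDl u v w : dot (u + v) w = dot u w + dot v w.
Proof. by rewrite /dot -big_split; apply: eq_bigr => i _; rewrite !mxE mulrDl. Qed.

Lemma dotDr u v w : dot w (u + v) = dot w u + dot w v.
Proof. by rewrite dotC dotDl !(dotC w). Qed.

Lemma dotZl (a : R) u v : dot (a *: u) v = a * dot u v.
Proof. by rewrite /dot mulr_sumr; apply: eq_bigr => i _; rewrite !mxE mulrA. Qed.

Lemma dotZr (a : R) u v : dot u (a *: v) = a * dot u v.
Proof. by rewrite dotC dotZl dotC. Qed.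

Lemma dotNl u v : dot (- u) v = - dot u v.
Proof. by rewrite -scaleN1r dotZl mulN1r. Qed.

Lemma dotNr u v : dot u (- v) = - dot u v.
Proof. by rewrite dotC dotNl dotC. Qed.

Lemma dotBl u v w : dot (u - v) w = dot u w - dot v w.
Proof. by rewrite dotDl dotNl. Qed.

Lemma dotBr u v w : dot w (u - v) = dot w u - dot w v.
Proof. by rewrite dotDr dotNr. Qed.

Lemma dot0l u : dot 0 u = 0.
Proof. by rewrite /dot big1 // => i _; rewrite mxE mul0r. Qed.

Lemma dot0r u : dot u 0 = 0.
Proof. by rewrite dotC dot0l. Qed.

Lemma dot_ge0 u : 0 <= dot u u.
Proof. by rewrite /dot; apply: sumr_ge0 => i _; rewrite -expr2 sqr_ge0. Qed.

Lemma dot_eq0 u : dot u u = 0 -> u = 0.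
Proof.
move=> h; apply/rowP => i; rewrite mxE.
have := h; rewrite /dot => /eqP; rewrite psumr_eq0; last by move=> j _; rewrite -expr2 sqr_ge0.
move=> /allP /(_ i (mem_index_enum _)) /=.
by rewrite mulf_eq0 orbb => /eqP.
Qed.

Lemma enorm2 u : enorm u ^+ 2 = dot u u.
Proof. by rewrite /enorm sqr_sqrtr // dot_ge0. Qed.

Lemma enorm_ge0 u : 0 <= enorm u.
Proof. by rewrite /enorm sqrtr_ge0. Qed.

Lemma dot_sum_r (I : Type) (r : seq I) (Pr : pred I) (f : I -> 'rV[R]_n) u :
  dot u (\sum_(i <- r | Pr i) f i) = \sum_(i <- r | Pr i) dot u (f i).
Proof. exact: (big_morph _ (fun a b => dotDr a b u) (dot0r u)). Qed.

Lemma cauchy_schwarz u v : dot u v <= enorm u * enorm v.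
Proof.
set a := enorm u; set b := enorm v.
have ha : 0 <= a := enorm_ge0 u. have hb : 0 <= b := enorm_ge0 v.
have hu : dot u u = a ^+ 2 by rewrite enorm2.
have hv : dot v v = b ^+ 2 by rewrite enorm2.
have key : forall t : R, 0 < t -> 2 * dot u v <= t * a ^+ 2 + t^-1 * b ^+ 2.
  move=> t ht.
  have := dot_ge0 (t *: u - v).
  rewrite !dotBl !dotBr !dotZl !dotZr (dotC v u) hu hv => h.
  have e : t * a ^+ 2 + t^-1 * b ^+ 2 - 2 * dot u v = t^-1 * (t * (t * a ^+ 2) - t * dot u v - (t * dot u v - b ^+ 2)).
    by field; rewrite gt_eqF.
  by rewrite -subr_ge0 e mulr_ge0 // invr_ge0 ltW.
have [a0|apos] := eqVneq a 0.
  have : u = 0 by apply: dot_eq0; rewrite hu a0 expr0n.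
  by move=> ->; rewrite dot0l a0 mul0r.
have [b0|bpos] := eqVneq b 0.
  have : v = 0 by apply: dot_eq0; rewrite hv b0 expr0n.
  by move=> ->; rewrite dot0r b0 mulr0.
have ap : 0 < a by rewrite lt_neqAle eq_sym apos ha.
have bp : 0 < b by rewrite lt_neqAle eq_sym bpos hb.
have := key (b / a) (divr_gt0 bp ap).
have -> : b / a * a ^+ 2 + (b / a)^-1 * b ^+ 2 = 2 * (a * b).
  by field; rewrite ?gt_eqF.
lra.
Qed.


Ltac dexp := rewrite ?dotBl ?dotBr ?dotDl ?dotDr ?dotNl ?dotNr ?dotZl ?dotZr.

Lemma enormZ (t : R) u : 0 <= t -> enorm (t *: u) = t * enorm u.
Proof.
move=> ht; rewrite /enorm dotZl dotZr mulrA -expr2 sqrtrM ?sqr_ge0 //.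
by rewrite sqrtr_sqr ger0_norm.
Qed.

Lemma ler_sq (p q : R) : 0 <= p -> p <= q -> p * p <= q * q.
Proof. by move=> hp hpq; apply: ler_pM. Qed.

Lemma enorm_le_sq u v : enorm u <= enorm v -> dot u u <= dot v v.
Proof. by move=> h; rewrite -!enorm2 !expr2; apply: ler_sq => //; apply: enorm_ge0. Qed.

Lemma dot_sub_scale (A E : 'rV[R]_n) (t : R) :
  dot (A - t *: E) (A - t *: E) = dot A A - 2 * t * dot A E + t ^+ 2 * dot E E.
Proof. dexp; rewrite (dotC E A); ring. Qed.

Lemma proj_char (X : set 'rV[R]_n) a p w :
  vi_convex_set X -> is_proj X a p -> X w -> dot (a - p) (w - p) <= 0.
Proof.
move=> cX [Xp hp] Xw; rewrite leNgt; apply/negP => dpos.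
set d := dot (a - p) (w - p) in dpos.
set s := dot (w - p) (w - p).
have s0 : 0 <= s := dot_ge0 _.
set t := d / (s + d).
have t0 : 0 < t by rewrite divr_gt0 // ltr_wpDl.
have t1 : t <= 1 by rewrite ler_pdivrMr ?ltr_wpDl // mul1r lerDr.
have Xq := cX _ _ t Xw Xp (ltW t0) t1.
have := enorm_le_sq _ _ (hp _ Xq).
have -> : a - (t *: w + (1 - t) *: p) = (a - p) - t *: (w - p).
  by apply/rowP => i; rewrite !mxE; ring.
rewrite dot_sub_scale -/d -/s => h.
have h2 : 2 * d <= t * s.
  have : 0 <= t * (t * s - 2 * d) by lra.
  by rewrite pmulr_rge0 // subr_ge0.
have : t * s < d.
  rewrite /t mulrAC ltr_pdivrMr ?ltr_wpDl //.
  nra.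
lra.
Qed.

Arguments proj_char {X a p w}.

Lemma eg_step (X : set 'rV[R]_n) (P : 'rV[R]_n -> 'rV[R]_n) x z a b :
  vi_convex_set X -> (forall v, is_proj X v (P v)) -> X z ->
  dot (P (x - b) - z) (P (x - b) - z) <=
    dot (x - z) (x - z) - dot (x - P (x - a)) (x - P (x - a))
    - dot (P (x - a) - P (x - b)) (P (x - a) - P (x - b))
    + 2 * dot (a - b) (P (x - b) - P (x - a))
    - 2 * dot b (P (x - a) - z).
Proof.
move=> cX hP Xz.
have Xx' : X (P (x - b)) by case: (hP (x - b)).
have h1 := proj_char cX (hP (x - b)) Xz.
have h2 := proj_char cX (hP (x - a)) Xx'.
move: h1 h2.
set y := P (x - a); set x' := P (x - b).
move=> h1 h2.
move: h1 h2; dexp => h1 h2.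
have := dotC x z; have := dotC x a; have := dotC x b; have := dotC x y; have := dotC x x';
have := dotC z a; have := dotC z b; have := dotC z y; have := dotC z x';
have := dotC a b; have := dotC a y; have := dotC a x';
have := dotC b y; have := dotC b x'; have := dotC y x'.
lra.
Qed.


Arguments eg_step {X P} x z a b.

Lemma dot_symB u v : dot (u - v) (u - v) = dot (v - u) (v - u).
Proof. by rewrite -opprB dotNl dotNr opprK. Qed.

Lemma enorm_symB u v : enorm (u - v) = enorm (v - u).
Proof. by rewrite /enorm dot_symB. Qed.

Lemma sq_add_le u v : dot (u + v) (u + v) <= 2 * dot u u + 2 * dot v v.
Proof.
have := dot_ge0 (u - v); dexp; rewrite ?(dotC v u) => h.
dexp; rewrite ?(dotC v u); lra.
Qed.

Lemma master_step (X : set 'rV[R]_n) (F H : 'rV[R]_n -> 'rV[R]_n) (LF LH mu g e : R)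
  (P : 'rV[R]_n -> 'rV[R]_n) x z :
  vi_convex_set X -> (forall v, is_proj X v (P v)) -> X x -> X z ->
  vi_lipschitz_on X F LF -> vi_monotone_on X F ->
  vi_lipschitz_on X H LH -> vi_strongly_monotone_on X H mu ->
  0 < g -> 0 < e -> 0 < mu ->
  g ^+ 2 * LF ^+ 2 + g * e * mu + g ^+ 2 * e ^+ 2 * LH ^+ 2 <= 1 / 2 ->
  forall y x', y = P (x - g *: (F x + e *: H x)) ->
  x' = P (x - g *: (F y + e *: H y)) ->
  2 * g * (dot (F z) (y - z) + e * dot (H z) (y - z))
  <= (1 - g * e * mu) * dot (x - z) (x - z) - dot (x' - z) (x' - z).
Proof.
move=> cX hP Xx Xz LipF monF LipH smH g0 e0 mu0 hstep y x' ey ex'.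
have := eg_step x z (g *: (F x + e *: H x)) (g *: (F y + e *: H y)) cX hP Xz.
rewrite -ey -ex'.
have Xy : X y by rewrite ey; case: (hP (x - g *: (F x + e *: H x))).
move=> heg.
set rho := enorm (x - y).
set sig := enorm (y - x').
have rho0 : 0 <= rho := enorm_ge0 _.
have sig0 : 0 <= sig := enorm_ge0 _.
have hcross : 2 * dot (g *: (F x + e *: H x) - g *: (F y + e *: H y)) (x' - y)
      <= 2 * g * ((LF + e * LH) * rho * sig).
  have -> : g *: (F x + e *: H x) - g *: (F y + e *: H y)
          = g *: ((F x - F y) + e *: (H x - H y)).
    by apply/rowP => i; rewrite !mxE; ring.
  rewrite dotZl dotDl dotZl.
  have h1 : dot (F x - F y) (x' - y) <= LF * rho * sig.
    apply: le_trans (cauchy_schwarz _ _) _.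
    rewrite (enorm_symB x' y) -/sig ler_wpM2r //.
    exact: LipF.
  have h2 : dot (H x - H y) (x' - y) <= LH * rho * sig.
    apply: le_trans (cauchy_schwarz _ _) _.
    rewrite (enorm_symB x' y) -/sig ler_wpM2r //.
    exact: LipH.
  have h2' : e * dot (H x - H y) (x' - y) <= e * (LH * rho * sig).
    by rewrite ler_wpM2l // ltW.
  have : dot (F x - F y) (x' - y) + e * dot (H x - H y) (x' - y) <= (LF + e * LH) * rho * sig.
    have -> : (LF + e * LH) * rho * sig = LF * rho * sig + e * (LH * rho * sig) by ring.
    exact: lerD.
  move=> h.
  have := ler_wpM2l (ltW (mulr_gt0 (ltr0Sn _ 1) g0)) h.
  by rewrite !mulrA.
have hamgm : 2 * g * ((LF + e * LH) * rho * sig)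
      <= (2 * g ^+ 2 * LF ^+ 2 + 2 * g ^+ 2 * e ^+ 2 * LH ^+ 2) * rho ^+ 2 + sig ^+ 2.
  have h0 : 0 <= (g * (LF + e * LH) * rho - sig) ^+ 2 := sqr_ge0 _.
  have h1 : 0 <= (g * (LF - e * LH) * rho) ^+ 2 := sqr_ge0 _.
  nra.
have hrho : dot (x - y) (x - y) = rho ^+ 2 by rewrite enorm2.
have hsig : dot (y - x') (y - x') = sig ^+ 2 by rewrite enorm2.
have hF : dot (F z) (y - z) <= dot (F y) (y - z).
  have := monF y z Xy Xz; rewrite dotBl subr_ge0 //.
have hH : dot (H z) (y - z) + mu * dot (y - z) (y - z) <= dot (H y) (y - z).
  have := smH y z Xy Xz; rewrite dotBl enorm2; lra.
have hpar : dot (x - z) (x - z) <= 2 * dot (x - y) (x - y) + 2 * dot (y - z) (y - z).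
  have -> : x - z = (x - y) + (y - z) by apply/rowP => i; rewrite !mxE; ring.
  exact: sq_add_le.
have hb : dot (g *: (F y + e *: H y)) (y - z) = g * (dot (F y) (y - z) + e * dot (H y) (y - z)).
  by rewrite dotZl dotDl dotZl.
rewrite hb hrho hsig in heg.
rewrite hrho in hpar.
have hH' : e * (dot (H z) (y - z) + mu * dot (y - z) (y - z)) <= e * dot (H y) (y - z).
  by rewrite ler_wpM2l // ltW.
have hsq0 : 0 <= dot (y - z) (y - z) := dot_ge0 _.
have hxz0 : 0 <= dot (x - z) (x - z) := dot_ge0 _.
set A := dot (x - z) (x - z) in heg hpar hxz0 *.
set Bq := dot (y - z) (y - z) in hH hpar hH' hsq0.
set FZ := dot (F z) (y - z) in hF *.
set HZ := dot (H z) (y - z) in hH hH' *.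
set FY := dot (F y) (y - z) in hF heg.
set HY := dot (H y) (y - z) in hH hH' heg.
have hge : 0 <= g * e * mu := mulr_ge0 (mulr_ge0 (ltW g0) (ltW e0)) (ltW mu0).
have key1 : 2 * g * (FZ + e * HZ) + 2 * g * e * mu * Bq <= 2 * g * (FY + e * HY).
  have : FZ + e * HZ + e * mu * Bq <= FY + e * HY by lra.
  move=> h; have := ler_wpM2l (ltW (mulr_gt0 (ltr0Sn _ 1) g0)) h; lra.
have key2 : g * e * mu * A <= 2 * g * e * mu * rho ^+ 2 + 2 * g * e * mu * Bq.
  have := ler_wpM2l hge hpar; lra.
have key3 : (2 * g ^+ 2 * LF ^+ 2 + 2 * g ^+ 2 * e ^+ 2 * LH ^+ 2) * rho ^+ 2
            <= (1 - 2 * g * e * mu) * rho ^+ 2.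
  apply: ler_wpM2r; first exact: sqr_ge0.
  lra.
lra.
Qed.


Lemma tele_theta (s w c theta : nat -> R) :
  (forall k, w k <= (1 - c k) * s k - s k.+1) -> (forall k, 0 < theta k) ->
  theta 0%N * (1 - c 0%N) = 1 -> (forall k, theta k.+1 * (1 - c k.+1) = theta k) ->
  forall K, \sum_(k < K.+1) theta k * w k <= s 0%N - theta K * s K.+1.
Proof.
move=> hw ht h0 hs; elim=> [|K IH].
  rewrite big_ord1 /=.
  have := ler_wpM2l (ltW (ht 0%N)) (hw 0%N).
  have : theta 0%N * ((1 - c 0%N) * s 0%N - s 1%N) = s 0%N - theta 0%N * s 1%N.
    by rewrite mulrBr mulrA h0 mul1r.
  lra.
rewrite big_ord_recr /=.
have := ler_wpM2l (ltW (ht K.+1)) (hw K.+1).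
have := hs K. move=> e1 h2.
have : theta K.+1 * ((1 - c K.+1) * s K.+1 - s K.+2) = theta K * s K.+1 - theta K.+1 * s K.+2.
  by rewrite -e1; ring.
lra.
Qed.

Lemma tele_eta (s w c theta eta : nat -> R) :
  (forall k, w k <= (1 - c k) * s k - s k.+1) -> (forall k, 0 < theta k) ->
  (forall k, 0 < eta k) -> (forall k, eta k.+1 <= eta k) -> (forall k, 0 <= s k) ->
  theta 0%N * (1 - c 0%N) = 1 -> (forall k, theta k.+1 * (1 - c k.+1) = theta k) ->
  forall K, \sum_(k < K.+1) eta k * theta k * w k <= eta 0%N * s 0%N - eta K * theta K * s K.+1.
Proof.
move=> hw ht he hed hs0 h0 hs; elim=> [|K IH].
  rewrite big_ord1 /=.
  have := ler_wpM2l (ltW (mulr_gt0 (he 0%N) (ht 0%N))) (hw 0%N).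
  have : eta 0%N * theta 0%N * ((1 - c 0%N) * s 0%N - s 1%N) = eta 0%N * s 0%N - eta 0%N * theta 0%N * s 1%N.
    by rewrite mulrBr; congr (_ - _); rewrite mulrA -(mulrA (eta 0%N)) h0 mulr1.
  lra.
rewrite big_ord_recr /=.
have := ler_wpM2l (ltW (mulr_gt0 (he K.+1) (ht K.+1))) (hw K.+1).
have := hs K. move=> e1 h2.
have : eta K.+1 * theta K.+1 * ((1 - c K.+1) * s K.+1 - s K.+2)
     = eta K.+1 * theta K * s K.+1 - eta K.+1 * theta K.+1 * s K.+2.
  by rewrite -e1; ring.
have : eta K.+1 * theta K * s K.+1 <= eta K * theta K * s K.+1.
  by rewrite -!mulrA ler_wpM2r // mulr_ge0 // ltW.
lra.
Qed.

Lemma ybar_rep (w Gamma : nat -> R) (y ybar : nat -> 'rV[R]_n) :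
  Gamma 0%N = 0 -> (forall k, 0 < w k) ->
  (forall k, Gamma k.+1 = Gamma k + w k) ->
  (forall k, ybar k.+1 = (Gamma k.+1)^-1 *: (Gamma k *: ybar k + w k *: y k.+1)) ->
  forall K, Gamma K = \sum_(k < K) w k /\
            Gamma K *: ybar K = \sum_(k < K) w k *: y k.+1.
Proof.
move=> G0 wp GS yS; elim=> [|K [IH1 IH2]].
  by rewrite !big_ord0 G0 scale0r.
have Gpos : 0 < Gamma K.+1.
  rewrite GS IH1; apply: ltr_wpDl; last exact: wp.
  by apply: sumr_ge0 => i _; apply: ltW.
split; first by rewrite big_ord_recr /= GS IH1.
by rewrite yS scalerA divff ?gt_eqF // scale1r big_ord_recr /= IH2.
Qed.

Lemma ybar_in (X : set 'rV[R]_n) (w Gamma : nat -> R) (y ybar : nat -> 'rV[R]_n) :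
  vi_convex_set X -> X (ybar 0%N) -> (forall k, X (y k.+1)) ->
  Gamma 0%N = 0 -> (forall k, 0 < w k) ->
  (forall k, Gamma k.+1 = Gamma k + w k) ->
  (forall k, ybar k.+1 = (Gamma k.+1)^-1 *: (Gamma k *: ybar k + w k *: y k.+1)) ->
  forall K, X (ybar K).
Proof.
move=> cX X0 Xy G0 wp GS yS.
have Gge : forall K, 0 <= Gamma K.
  by elim=> [|K IH]; rewrite ?G0 // GS addr_ge0 // ltW.
elim=> [|K IH] //.
have Gpos : 0 < Gamma K.+1 by rewrite GS ltr_wpDl.
rewrite yS scalerDr !scalerA.
have -> : (Gamma K.+1)^-1 * w K = 1 - (Gamma K.+1)^-1 * Gamma K.
  by rewrite GS; field; rewrite -GS gt_eqF.
apply: cX => //.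
  by rewrite mulr_ge0 // invr_ge0 ltW.
by rewrite mulrC ler_pdivrMr // mul1r GS lerDl ltW.
Qed.

Lemma ybar_dot (w Gamma : nat -> R) (y ybar : nat -> 'rV[R]_n) v z K :
  (0 < \sum_(k < K) w k) ->
  Gamma K = \sum_(k < K) w k ->
  Gamma K *: ybar K = \sum_(k < K) w k *: y k.+1 ->
  dot v (ybar K - z) = (\sum_(k < K) w k * dot v (y k.+1 - z)) / \sum_(k < K) w k.
Proof.
move=> Sp e1 e2.
have e3 : (\sum_(k < K) w k) *: (ybar K - z) = \sum_(k < K) w k *: (y k.+1 - z).
  rewrite scalerBr -{1}e1 e2 scaler_suml -sumrB; apply: eq_bigr => i _.
  by rewrite scalerBr.
have : dot v ((\sum_(k < K) w k) *: (ybar K - z)) = \sum_(k < K) w k * dot v (y k.+1 - z).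
  by rewrite e3 dot_sum_r; apply: eq_bigr => i _; rewrite dotZr.
rewrite dotZr => <-.
by rewrite mulrC mulrA mulVf ?gt_eqF // mul1r.
Qed.


Lemma comp_le_enorm (v : 'rV[R]_n) i : `|v ord0 i| <= enorm v.
Proof.
rewrite /enorm -sqrtr_sqr; apply: ler_wsqrtr.
rewrite /dot (bigD1 i) //= -expr2 lerDl.
by apply: sumr_ge0 => j _; rewrite -expr2 sqr_ge0.
Qed.

Lemma mxnorm_le_enorm (v : 'rV[R]_n) : `|v| <= enorm v.
Proof.
have -> : `|v| = mx_norm v by []. rewrite mx_normrE.
apply: bigmax_le => [|ij _]; first exact: enorm_ge0.
by rewrite (ord1 ij.1); apply: comp_le_enorm.
Qed.

Lemma comp_le_mxnorm (v : 'rV[R]_n) i : `|v ord0 i| <= `|v|.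
Proof.
have -> : `|v| = mx_norm v by []. rewrite mx_normrE.
exact: (@le_bigmax _ _ _ 0 (fun ij : 'I_1 * 'I_n => `|v ij.1 ij.2|) (ord0, i)).
Qed.

Lemma lt_of_sq (a d : R) : 0 <= a -> 0 < d -> a ^+ 2 < d ^+ 2 -> a < d.
Proof.
move=> a0 d0 h; rewrite ltNge; apply/negP => hda.
have := ler_sq _ _ (ltW d0) hda; rewrite -!expr2; lra.
Qed.

Lemma enorm_lt_mxnorm (v : 'rV[R]_n) (d : R) : 0 < d ->
  `|v| < d / (n%:R + 1) -> enorm v < d.
Proof.
move=> d0 hv.
have n1 : 0 < n%:R + 1 :> R by rewrite ltr_wpDl.
set r := d / (n%:R + 1) in hv.
have r0 : 0 < r by rewrite divr_gt0.
have hsq : dot v v <= n%:R * `|v| ^+ 2.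
  apply: (@le_trans _ _ (\sum_(i < n) `|v| ^+ 2)).
    rewrite /dot.
    apply: ler_sum => i _; rewrite -expr2 -real_normK ?num_real //.
    by apply: ler_sq; [exact: normr_ge0 | apply: comp_le_mxnorm].
  by rewrite sumr_const card_ord mulr_natl.
apply: lt_of_sq; [exact: enorm_ge0 | exact: d0 |].
rewrite enorm2; apply: (le_lt_trans hsq).
have v0 : 0 <= `|v| by [].
have : `|v| ^+ 2 < r ^+ 2 by rewrite !expr2; apply: ltr_pM => //.
have -> : d = r * (n%:R + 1) by rewrite /r divfK ?gt_eqF.
move=> h.
have hn : 0 <= n%:R :> R by [].
nra.
Qed.


Lemma freq_cluster (X : set 'rV[R]_n) (u : nat -> 'rV[R]_n) (B : nat -> Prop) M :
  closed X -> (forall v, X v -> enorm v <= M) -> (forall k, X (u k)) ->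
  (forall N, exists k, (N <= k)%N /\ B k) ->
  exists p, X p /\ forall d, 0 < d -> forall N,
    exists k, [/\ (N <= k)%N, B k & enorm (u k - p) < d].
Proof.
move=> clX bM Xu hB.
have bX : bounded_set X.
  exists M; split; first exact: num_real.
  move=> M' hM' v Xv /=.
  apply: le_trans (mxnorm_le_enorm v) _.
  by apply: le_trans (bM _ Xv) (ltW hM').
have cpt := bounded_closed_compact bX clX.
pose Fb := fun A : set 'rV[R]_n => exists N, forall k, (N <= k)%N -> B k -> A (u k).
have PF : ProperFilter Fb.
  constructor.
    move=> [N hN]; have [k [Nk Bk]] := hB N; exact: hN k Nk Bk.
  constructor.
  - by exists 0%N.
  - move=> A1 A2 [N1 h1] [N2 h2]; exists (maxn N1 N2) => k hk Bk; split.
      by apply: h1 => //; apply: leq_trans hk; apply: leq_maxl.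
    by apply: h2 => //; apply: leq_trans hk; apply: leq_maxr.
  - by move=> A1 A2 sA [N h]; exists N => k hk Bk; apply: sA; apply: h.
have FX : Fb X by exists 0%N.
have [p [Xp clp]] := cpt Fb PF FX.
exists p; split => // d d0 N.
have hA : Fb [set v | exists k, [/\ (N <= k)%N, B k & v = u k]].
  by exists N => k ? ?; exists k.
have hB' : nbhs p [set v | enorm (v - p) < d].
  apply/nbhs_ballP; exists (d / (n%:R + 1)).
    by rewrite /= divr_gt0 // ltr_wpDl.
  move=> v /=; rewrite -ball_normE /= => hv.
  by apply: enorm_lt_mxnorm => //; rewrite -normrN opprB.
have [v [[k [Nk Bk ->]] hk]] := clp _ _ hA hB'.
by exists k.
Qed.


Lemma small_lin (K c : R) : (forall t, 0 < t -> t <= 1 -> - (t * K) <= c) -> 0 <= c.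
Proof.
move=> h; rewrite leNgt; apply/negP => c0.
set d := - c.
have d0 : 0 < d by rewrite /d oppr_gt0.
set Kp := `|K|.
have Kp0 : 0 <= Kp := normr_ge0 K.
set t := d / (Kp + d).
have t0 : 0 < t by rewrite divr_gt0 // ltr_wpDl.
have t1 : t <= 1 by rewrite ler_pdivrMr ?ltr_wpDl // mul1r lerDr.
have := h t t0 t1.
have : t * K <= t * Kp.
  apply: ler_wpM2l; [exact: ltW | exact: ler_norm].
move=> h1 h2.
have h3 : d <= t * Kp by rewrite /d; lra.
have : t * Kp < d.
  rewrite /t mulrAC ltr_pdivrMr ?ltr_wpDl //. nra.
lra.
Qed.

Lemma minty (Y : set 'rV[R]_n) (G : 'rV[R]_n -> 'rV[R]_n) L p :
  vi_convex_set Y -> vi_lipschitz_on Y G L -> Y p ->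
  (forall z, Y z -> dot (G z) (p - z) <= 0) ->
  forall z, Y z -> 0 <= dot (G p) (z - p).
Proof.
move=> cY LG Yp h z Yz.
apply: (@small_lin (L * enorm (z - p) ^+ 2)) => t t0 t1.
have Yw := cY _ _ t Yz Yp (ltW t0) t1.
set w := t *: z + (1 - t) *: p in Yw.
have ew : w - p = t *: (z - p) by apply/rowP => i; rewrite !mxE; ring.
have epw : p - w = - (t *: (z - p)) by rewrite -ew opprB.
have h1 : 0 <= dot (G w) (z - p).
  have := h w Yw; rewrite epw dotNr dotZr oppr_le0.
  by rewrite pmulr_rge0.
have h2 : dot (G w - G p) (z - p) <= t * (L * enorm (z - p) ^+ 2).
  apply: le_trans (cauchy_schwarz _ _) _.
  have := LG w p Yw Yp; rewrite ew (enormZ _ _ (ltW t0)) => hL.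
  have := ler_wpM2r (enorm_ge0 (z - p)) hL.
  have -> : t * (L * enorm (z - p) ^+ 2) = L * (t * enorm (z - p)) * enorm (z - p).
    by rewrite expr2; ring.
  by [].
move: h2; rewrite dotBl; lra.
Qed.

Arguments minty {Y G L p}.


Lemma dot_negB v a b : dot v (a - b) = - dot v (b - a).
Proof. by rewrite -dotNr opprB. Qed.

Lemma lip_sub (X Y : set 'rV[R]_n) G L :
  Y `<=` X -> vi_lipschitz_on X G L -> vi_lipschitz_on Y G L.
Proof. by move=> sYX hL a b Ya Yb; apply: hL; apply: sYX. Qed.

Lemma sol_convex (X : set 'rV[R]_n) G L :
  vi_convex_set X -> vi_lipschitz_on X G L -> vi_monotone_on X G ->
  vi_convex_set (SOL X G).
Proof.
move=> cX LG mG y1 y2 t [X1 h1] [X2 h2] t0 t1.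
have Xw := cX _ _ t X1 X2 t0 t1.
split => //; apply: (minty cX LG Xw) => z Xz.
have -> : t *: y1 + (1 - t) *: y2 - z = t *: (y1 - z) + (1 - t) *: (y2 - z).
  by apply/rowP => i; rewrite !mxE; ring.
rewrite dotDr !dotZr.
have hi : forall yi, X yi -> (forall y, X y -> 0 <= dot (G yi) (y - yi)) ->
    dot (G z) (yi - z) <= 0.
  move=> yi Xi hh; have := mG z yi Xz Xi; have := hh z Xz.
  rewrite dotBl (dot_negB (G z) yi z); lra.
have := hi _ X1 h1; have := hi _ X2 h2.
move=> a b.
have : t * dot (G z) (y1 - z) <= 0 by apply: mulr_ge0_le0.
have : (1 - t) * dot (G z) (y2 - z) <= 0 by apply: mulr_ge0_le0; rewrite // subr_ge0.
lra.
Qed.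

Lemma sol_unique (X Y : set 'rV[R]_n) G mu p q :
  Y `<=` X -> vi_strongly_monotone_on X G mu -> 0 < mu ->
  SOL Y G p -> SOL Y G q -> p = q.
Proof.
move=> sYX smG mu0 [Yp hp] [Yq hq].
have := smG p q (sYX _ Yp) (sYX _ Yq).
have := hp q Yq; have := hq p Yp.
rewrite dotBl (dot_negB (G p) p q) enorm2 => a b c.
have : mu * dot (p - q) (p - q) <= 0 by lra.
rewrite pmulr_rle0 // => h.
have : p - q = 0 by apply: dot_eq0; apply/eqP; rewrite eq_le h dot_ge0.
by move/eqP; rewrite subr_eq0 => /eqP.
Qed.

Lemma approx v z p :
  (forall d, 0 < d -> exists q, dot v (q - z) <= d /\ enorm (q - p) < d) ->
  dot v (p - z) <= 0.
Proof.
move=> h; apply/ler_addgt0Pr => e e0; rewrite add0r.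
have nv := enorm_ge0 v.
set d := e / (1 + enorm v).
have d0 : 0 < d by rewrite divr_gt0 // ltr_pwDl.
have [q [h1 h2]] := h d d0.
have -> : p - z = (q - z) + (p - q) by apply/rowP => i; rewrite !mxE; ring.
rewrite dotDr.
have h3 : dot v (p - q) <= enorm v * d.
  apply: le_trans (cauchy_schwarz _ _) _.
  by rewrite enorm_symB ler_wpM2l // ltW.
have : e = d * (1 + enorm v) by rewrite /d divfK // gt_eqF // ltr_pwDl.
nra.
Qed.


Arguments sol_convex {X G L}.
Arguments lip_sub {X Y G L}.
Arguments sol_unique {X Y G mu p q}.
Arguments freq_cluster {X u} B {M}.

Lemma iii_abs (X : set 'rV[R]_n) (F H : 'rV[R]_n -> 'rV[R]_n) LF LH mu M
  (u : nat -> 'rV[R]_n) (e1 e2 : nat -> R) :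
  closed X -> vi_convex_set X -> (forall v, X v -> enorm v <= M) ->
  vi_lipschitz_on X F LF -> vi_monotone_on X F ->
  vi_lipschitz_on X H LH -> vi_strongly_monotone_on X H mu -> 0 < mu ->
  (forall k, X (u k)) ->
  (forall k z, X z -> dot (F z) (u k - z) <= e1 k) ->
  (forall k z, SOL X F z -> dot (H z) (u k - z) <= e2 k) ->
  (forall d, 0 < d -> exists N, forall k, (N <= k)%N -> e1 k <= d /\ e2 k <= d) ->
  exists xs, SOL (SOL X F) H = [set xs] /\
    forall eps, 0 < eps -> exists N, forall k, (N <= k)%N -> enorm (u k - xs) < eps.
Proof.
move=> clX cX bM LipF monF LipH smH mu0 Xu h1 h2 hcv.
have sSX : SOL X F `<=` X by move=> z [].
have cS := sol_convex cX LipF monF.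
have LipHS := lip_sub sSX LipH.
have Q : forall (B : nat -> Prop) p, X p ->
    (forall d, 0 < d -> forall N, exists k, [/\ (N <= k)%N, B k & enorm (u k - p) < d]) ->
    SOL (SOL X F) H p.
  move=> B p Xp hp.
  have Sp : SOL X F p.
    split => //; apply: (minty cX LipF Xp) => z Xz.
    apply: approx => d d0.
    have [N hN] := hcv d d0.
    have [k [Nk _ hk]] := hp d d0 N.
    exists (u k); split => //.
    by apply: le_trans (h1 k z Xz) _; case: (hN k Nk).
  split => //; apply: (minty cS LipHS Sp) => z Sz.
  apply: approx => d d0.
  have [N hN] := hcv d d0.
  have [k [Nk _ hk]] := hp d d0 N.
  exists (u k); split => //.
  by apply: le_trans (h2 k z Sz) _; case: (hN k Nk).
have [p [Xp hp]] := freq_cluster (fun _ => True) clX bM Xu (fun N => ex_intro _ N (conj (leqnn N) I)).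
have Sp := Q _ p Xp hp.
have uniq : forall q, SOL (SOL X F) H q -> q = p.
  by move=> q hq; apply: (sol_unique sSX smH mu0 hq Sp).
exists p; split.
  apply/seteqP; split => q /=; first exact: uniq.
  by move=> ->.
move=> eps eps0.
apply: contrapT => hn.
have hB : forall N, exists k, (N <= k)%N /\ eps <= enorm (u k - p).
  move=> N; apply: contrapT => hno; apply: hn; exists N => k Nk.
  rewrite ltNge; apply/negP => hk; apply: hno; exists k; split => //.
have [q [Xq hq]] := freq_cluster (fun k => eps <= enorm (u k - p)) clX bM Xu hB.
have Sq := Q _ q Xq hq.
have eqp := uniq q Sq; subst q.
have [k [_ Bk hk]] := hq eps eps0 0%N.
by move: Bk; rewrite leNgt hk.
Qed.


Lemma sup_img_ge (Y : set 'rV[R]_n) (f : 'rV[R]_n -> R) B z :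
  (forall y, Y y -> f y <= B) -> Y z -> f z <= sup [set f y | y in Y].
Proof.
move=> hB Yz; apply: ub_le_sup; last by exists z.
by exists B => r [y Yy <-]; apply: hB.
Qed.

Lemma sup_img_le (Y : set 'rV[R]_n) (f : 'rV[R]_n -> R) B :
  Y !=set0 -> (forall y, Y y -> f y <= B) -> sup [set f y | y in Y] <= B.
Proof.
move=> [z Yz] hB; apply: ge_sup; first by exists (f z); exists z.
by move=> r [y Yy <-]; apply: hB.
Qed.

Lemma sq_le_bound v M : enorm v <= M -> dot v v <= M ^+ 2.
Proof.
move=> h; rewrite -enorm2 !expr2; apply: ler_sq => //; exact: enorm_ge0.
Qed.

Arguments sq_le_bound {v M}.

Lemma diff_bound (X : set 'rV[R]_n) M a b :
  (forall v, X v -> enorm v <= M) -> X a -> X b -> dot (a - b) (a - b) <= 4 * M ^+ 2.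
Proof.
move=> bM Xa Xb.
have := sq_add_le a (- b); rewrite dotNl dotNr opprK.
have := sq_le_bound (bM _ Xa); have := sq_le_bound (bM _ Xb).
lra.
Qed.

Arguments diff_bound {X M a b}.

Lemma DX2_ge (X : set 'rV[R]_n) M a b :
  (forall v, X v -> enorm v <= M) -> X a -> X b -> dot (a - b) (a - b) <= 2 * DX2 X.
Proof.
move=> bM Xa Xb.
have : enorm (a - b) ^+ 2 / 2 <= DX2 X.
  apply: ub_le_sup.
    exists (4 * M ^+ 2 / 2) => r [a' Xa' [b' Xb' <-]].
    rewrite enorm2; apply: ler_pM => //.
    - exact: dot_ge0.
    - exact: diff_bound bM Xa' Xb'.
  by exists a => //; exists b.
rewrite enorm2; lra.
Qed.

Lemma fun_bound (X : set 'rV[R]_n) G L M x0 :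
  (forall v, X v -> enorm v <= M) -> vi_lipschitz_on X G L -> X x0 ->
  exists B, forall x, X x -> enorm (G x) <= B.
Proof.
move=> bM LG Xx0.
exists (Num.sqrt (2 * (L ^+ 2 * (4 * M ^+ 2)) + 2 * dot (G x0) (G x0))) => x Xx.
rewrite /enorm; apply: ler_wsqrtr.
have e : G x = (G x - G x0) + G x0 by rewrite subrK.
rewrite e; apply: le_trans (sq_add_le _ _) _.
rewrite lerD2r ler_pM2l //.
have h1 : enorm (G x - G x0) <= `|L| * enorm (x - x0).
  apply: le_trans (LG _ _ Xx Xx0) _; apply: ler_wpM2r; [exact: enorm_ge0 | exact: ler_norm].
have := sq_le_bound h1.
rewrite exprMn real_normK ?num_real // enorm2 => h2.
apply: le_trans h2 _; apply: ler_wpM2l; first exact: sqr_ge0.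
exact: diff_bound bM Xx Xx0.
Qed.

End DotLemmas.
Theorem theorem4p4 (R : realType) (n : nat) (X : set 'rV[R]_n)
  (F H : 'rV[R]_n -> 'rV[R]_n) (LF LH muH gamma : R) (eta : nat -> R)
  (P : 'rV[R]_n -> 'rV[R]_n)
  (x y ybar : nat -> 'rV[R]_n) (Gamma theta : nat -> R) :
  X !=set0 -> topology_structure.closed X -> vi_convex_set X -> vi_bounded_set X ->
  vi_lipschitz_on X F LF -> vi_monotone_on X F ->
  vi_lipschitz_on X H LH -> 0 < muH -> vi_strongly_monotone_on X H muH ->
  SOL X F !=set0 ->
  0 < gamma ->
  (forall k, 0 < eta k) -> (forall k, eta k.+1 <= eta k) ->
  (forall k, gamma ^+ 2 * LF ^+ 2 + gamma * eta k * muH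
             + gamma ^+ 2 * eta k ^+ 2 * LH ^+ 2 <= 1 / 2) ->
  (forall z, is_proj X z (P z)) ->
  X (x 0%N) -> X (ybar 0%N) -> Gamma 0%N = 0 ->
  theta 0%N = 1 / (1 - gamma * eta 0%N * muH) ->
  (forall k, y k.+1 = P (x k - gamma *: (F (x k) + eta k *: H (x k)))) ->
  (forall k, x k.+1 = P (x k - gamma *: (F (y k.+1) + eta k *: H (y k.+1)))) ->
  (forall k, Gamma k.+1 = Gamma k + eta k * theta k) ->
  (forall k, ybar k.+1 =
     (Gamma k.+1)^-1 *: (Gamma k *: ybar k + (eta k * theta k) *: y k.+1)) ->
  (forall k, theta k.+1 = theta k / (1 - gamma * eta k.+1 * muH)) ->
  (* (i) *)
  (forall K : nat, (1 <= K)%N ->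
     - BH X F H * dist (ybar K) (SOL X F) <= Gap (ybar K) (SOL X F) H /\
     Gap (ybar K) (SOL X F) H
       <= gamma^-1 * DX2 X / (\sum_(j < K) eta j * theta j)) /\
  (* (ii) *)
  (forall K : nat, (1 <= K)%N ->
     0 <= Gap (ybar K) X F /\
     Gap (ybar K) X F
       <= (gamma^-1 * eta 0%N * DX2 X
           + CH X H * Num.sqrt 2 * DX X * (\sum_(j < K) eta j ^+ 2 * theta j))
          / (\sum_(j < K) eta j * theta j)) /\
  (* (iii) *)
  ((fun k => \sum_(j < k.+1) eta j * theta j) @ \oo --> +oo ->
   (fun k => (\sum_(j < k.+1) eta j ^+ 2 * theta j)
             / (\sum_(j < k.+1) eta j * theta j)) @ \oo --> (0 : R) ->
   exists xs : 'rV[R]_n,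
     SOL (SOL X F) H = [set xs] /\
     (fun k => enorm (ybar k - xs)) @ \oo --> (0 : R)).
Proof.
move=> X0 clX cX bX LipF monF LipH mu0 smH S0 g0 eta0 etaD hstep hP Xx0 Xyb0 G0 th0
  ey ex GS ybS thS.
have [M bM] := bX.
have [x00 Xx00] := X0.
have Xx : forall k, X (x k).
  by elim=> [|k IH] //; rewrite ex; case: (hP (x k - gamma *: (F (y k.+1) + eta k *: H (y k.+1)))).
have Xy : forall k, X (y k.+1).
  by move=> k; rewrite ey; case: (hP (x k - gamma *: (F (x k) + eta k *: H (x k)))).
pose c := fun k => gamma * eta k * muH.
have c0 : forall k, 0 < c k by move=> k; rewrite /c !mulr_gt0.
have c12 : forall k, c k <= 1 / 2.
  move=> k; have := hstep k.
  have : 0 <= gamma ^+ 2 * LF ^+ 2 by apply: mulr_ge0; apply: sqr_ge0.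
  have : 0 <= gamma ^+ 2 * eta k ^+ 2 * LH ^+ 2.
    by apply: mulr_ge0; [apply: mulr_ge0|]; apply: sqr_ge0.
  rewrite /c; lra.
have c1 : forall k, 0 < 1 - c k by move=> k; have := c12 k; lra.
have thpos : forall k, 0 < theta k.
  elim=> [|k IH]; first by rewrite th0 divr_gt0 //; exact: (c1 0%N).
  by rewrite thS divr_gt0 //; exact: (c1 k.+1).
have th0' : theta 0%N * (1 - c 0%N) = 1.
  by rewrite th0 mul1r mulVf // gt_eqF //; exact: (c1 0%N).
have thS' : forall k, theta k.+1 * (1 - c k.+1) = theta k.
  by move=> k; rewrite thS divfK // gt_eqF //; exact: (c1 k.+1).
have wpos : forall k, 0 < eta k * theta k by move=> k; rewrite mulr_gt0.
have rep := ybar_rep _ _ _ _ G0 wpos GS ybS.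
have Xyb : forall K, X (ybar K) := ybar_in _ _ _ _ _ cX Xyb0 Xy G0 wpos GS ybS.
have step : forall z, X z -> forall k,
    2 * gamma * (dot (F z) (y k.+1 - z) + eta k * dot (H z) (y k.+1 - z))
    <= (1 - c k) * dot (x k - z) (x k - z) - dot (x k.+1 - z) (x k.+1 - z).
  move=> z Xz k.
  apply: (master_step _ _ _ _ _ _ _ _ _ _ _ cX hP (Xx k) Xz LipF monF LipH smH g0 (eta0 k) mu0 (hstep k)).
    exact: ey.
  exact: ex.
have s0le : forall z, X z -> dot (x 0%N - z) (x 0%N - z) <= 2 * DX2 X.
  by move=> z Xz; apply: (DX2_ge _ _ _ _ bM (Xx 0%N) Xz).
have D2ge0 : 0 <= DX2 X.
  have := s0le _ (Xx 0%N); rewrite subrr dot0l; lra.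
have sumpos : forall K, 0 < \sum_(j < K.+1) eta j * theta j.
  move=> K; rewrite big_ord_recr /= ltr_wpDl //.
  by apply: sumr_ge0 => i _; apply: ltW.
have pt2 : forall K z, SOL X F z ->
    dot (H z) (ybar K.+1 - z) <= gamma^-1 * DX2 X / \sum_(j < K.+1) eta j * theta j.
  move=> K z [Xz solz].
  have tele := tele_theta (fun k => dot (x k - z) (x k - z)) _ _ _ (step z Xz) thpos th0' thS' K.
  have hsum : 2 * gamma * \sum_(k < K.+1) eta k * theta k * dot (H z) (y k.+1 - z)
      <= \sum_(k < K.+1) theta k * (2 * gamma * (dot (F z) (y k.+1 - z) + eta k * dot (H z) (y k.+1 - z))).
    rewrite mulr_sumr; apply: ler_sum => k _.
    have := solz _ (Xy k).
    rewrite (dot_negB (F z)) oppr_ge0 => ha.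
    have hp : 0 <= 2 * gamma * theta k * (- dot (F z) (z - y k.+1)).
      by apply: mulr_ge0; [apply: mulr_ge0; [apply: mulr_ge0|]; apply: ltW | rewrite oppr_ge0].
    set a := dot (F z) (z - y k.+1) in ha hp *.
    set b := dot (H z) (y k.+1 - z).
    have -> : theta k * (2 * gamma * (- a + eta k * b))
      = 2 * gamma * (eta k * theta k * b) + 2 * gamma * theta k * (- a) by ring.
    lra.
  have hR : dot (x 0%N - z) (x 0%N - z) - theta K * dot (x K.+1 - z) (x K.+1 - z) <= 2 * DX2 X.
    have := s0le z Xz; have : 0 <= theta K * dot (x K.+1 - z) (x K.+1 - z).
      by apply: mulr_ge0; [apply: ltW | apply: dot_ge0].
    lra.
  have h3 : gamma * \sum_(k < K.+1) eta k * theta k * dot (H z) (y k.+1 - z) <= DX2 X.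
    have := le_trans hsum (le_trans tele hR); lra.
  have h4 : \sum_(k < K.+1) eta k * theta k * dot (H z) (y k.+1 - z) <= gamma^-1 * DX2 X.
    have e : \sum_(k < K.+1) eta k * theta k * dot (H z) (y k.+1 - z)
      = gamma^-1 * (gamma * \sum_(k < K.+1) eta k * theta k * dot (H z) (y k.+1 - z)).
      by rewrite mulrA mulVf ?gt_eqF // mul1r.
    rewrite e; apply: ler_wpM2l => //; rewrite invr_ge0; exact: ltW.
  have [r1 r2] := rep K.+1.
  rewrite (ybar_dot (fun k => eta k * theta k) Gamma y ybar (H z) z K.+1 (sumpos K) r1 r2).
  apply: ler_wpM2r => //; rewrite invr_ge0; exact: ltW.
have [BHb hBHb] := fun_bound _ _ _ _ _ bM LipH Xx00.
have CHge : forall z, X z -> enorm (H z) <= CH X H.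
  by move=> z Xz; apply: (sup_img_ge X (fun v => enorm (H v)) BHb z hBHb Xz).
have CH0 : 0 <= CH X H := le_trans (enorm_ge0 _) (CHge _ Xx00).
have DXge : forall a b, X a -> X b -> enorm (a - b) <= Num.sqrt 2 * DX X.
  move=> a b Xa Xb; rewrite /DX -sqrtrM //; apply: ler_wsqrtr.
  exact: (DX2_ge _ _ _ _ bM Xa Xb).
set CM := CH X H * Num.sqrt 2 * DX X.
have CM0 : 0 <= CM by rewrite /CM !mulr_ge0 // ?sqrtr_ge0.
have hb : forall z, X z -> forall k, - CM <= dot (H z) (y k.+1 - z).
  move=> z Xz k.
  have := cauchy_schwarz (- H z) (y k.+1 - z).
  rewrite dotNl.
  have -> : enorm (- H z) = enorm (H z) by rewrite /enorm dotNl dotNr opprK.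
  have : enorm (H z) * enorm (y k.+1 - z) <= CM.
    rewrite /CM -mulrA; apply: ler_pM; [exact: enorm_ge0 | exact: enorm_ge0 | exact: CHge | exact: DXge].
  lra.
have pt1 : forall K z, X z ->
    dot (F z) (ybar K.+1 - z) <=
    (gamma^-1 * eta 0%N * DX2 X + CM * \sum_(j < K.+1) eta j ^+ 2 * theta j)
      / \sum_(j < K.+1) eta j * theta j.
  move=> K z Xz.
  have tele := tele_eta (fun k => dot (x k - z) (x k - z)) _ _ _ _ (step z Xz) thpos eta0 etaD
    (fun k => dot_ge0 _) th0' thS' K.
  have hR : eta 0%N * dot (x 0%N - z) (x 0%N - z)
      - eta K * theta K * dot (x K.+1 - z) (x K.+1 - z) <= eta 0%N * (2 * DX2 X).
    have := ler_wpM2l (ltW (eta0 0%N)) (s0le z Xz).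
    have : 0 <= eta K * theta K * dot (x K.+1 - z) (x K.+1 - z).
      by apply: mulr_ge0; [apply: ltW | apply: dot_ge0].
    lra.
  have hsum : \sum_(k < K.+1) 2 * gamma * (eta k * theta k * dot (F z) (y k.+1 - z))
    <= \sum_(k < K.+1) (eta k * theta k * (2 * gamma * (dot (F z) (y k.+1 - z)
              + eta k * dot (H z) (y k.+1 - z))) + 2 * gamma * CM * (eta k ^+ 2 * theta k)).
    apply: ler_sum => k _.
    have := hb z Xz k.
    set a := dot (F z) (y k.+1 - z).
    set b := dot (H z) (y k.+1 - z).
    move=> hbk.
    have hp : 0 <= 2 * gamma * (eta k ^+ 2 * theta k) * (b + CM).
      apply: mulr_ge0; last by lra.
      apply: mulr_ge0; first by apply: mulr_ge0 => //; apply: ltW.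
      by apply: mulr_ge0; [apply: sqr_ge0 | apply: ltW].
    have -> : eta k * theta k * (2 * gamma * (a + eta k * b)) + 2 * gamma * CM * (eta k ^+ 2 * theta k)
      = 2 * gamma * (eta k * theta k * a) + 2 * gamma * (eta k ^+ 2 * theta k) * (b + CM) by ring.
    lra.
  rewrite big_split /= -!mulr_sumr in hsum.
  have h3 : gamma * \sum_(k < K.+1) eta k * theta k * dot (F z) (y k.+1 - z)
      <= eta 0%N * DX2 X + gamma * CM * \sum_(k < K.+1) eta k ^+ 2 * theta k.
    have := le_trans tele hR; lra.
  have h4 : \sum_(k < K.+1) eta k * theta k * dot (F z) (y k.+1 - z)
      <= gamma^-1 * eta 0%N * DX2 X + CM * \sum_(j < K.+1) eta j ^+ 2 * theta j.
    have e : \sum_(k < K.+1) eta k * theta k * dot (F z) (y k.+1 - z)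
      = gamma^-1 * (gamma * \sum_(k < K.+1) eta k * theta k * dot (F z) (y k.+1 - z)).
      by rewrite mulrA mulVf ?gt_eqF // mul1r.
    have e2 : gamma^-1 * eta 0%N * DX2 X + CM * \sum_(j < K.+1) eta j ^+ 2 * theta j
      = gamma^-1 * (eta 0%N * DX2 X + gamma * CM * \sum_(k < K.+1) eta k ^+ 2 * theta k).
      by field; rewrite gt_eqF.
    rewrite e e2; apply: ler_wpM2l => //; rewrite invr_ge0; exact: ltW.
  have [r1 r2] := rep K.+1.
  rewrite (ybar_dot (fun k => eta k * theta k) Gamma y ybar (F z) z K.+1 (sumpos K) r1 r2).
  apply: ler_wpM2r => //; rewrite invr_ge0; exact: ltW.
have BHge : forall s, SOL X F s -> enorm (H s) <= BH X F H.
  move=> s hs; apply: (sup_img_ge (SOL X F) (fun v => enorm (H v)) BHb s _ hs).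
  by move=> v [Xv _]; apply: hBHb.
have [s00 Ss00] := S0.
have BH0 : 0 <= BH X F H := le_trans (enorm_ge0 _) (BHge _ Ss00).
split.
  move=> K; case: K => [//|K] _.
  have up : Gap (ybar K.+1) (SOL X F) H <= gamma^-1 * DX2 X / \sum_(j < K.+1) eta j * theta j.
    exact: (sup_img_le (SOL X F) (fun s => dot (H s) (ybar K.+1 - s)) _ S0 (pt2 K)).
  split => //.
  apply/ler_addgt0Pr => e e0.
  set BHv := BH X F H in BH0 BHge *.
  set d := e / (BHv + 1).
  have d0 : 0 < d by rewrite divr_gt0 // ltr_wpDl.
  have hinf : has_inf [set enorm (ybar K.+1 - y0) | y0 in SOL X F].
    split; first by exists (enorm (ybar K.+1 - s00)); exists s00.
    by exists 0 => r [s _ <-]; apply: enorm_ge0.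
  have [r [s Ss <-] hr] := inf_adherent d0 hinf.
  rewrite -/(dist (ybar K.+1) (SOL X F)) in hr.
  set dd := dist (ybar K.+1) (SOL X F) in hr *.
  have hle : dot (H s) (ybar K.+1 - s) <= Gap (ybar K.+1) (SOL X F) H.
    exact: (sup_img_ge (SOL X F) (fun s => dot (H s) (ybar K.+1 - s)) _ s (pt2 K) Ss).
  have h3 : - (enorm (H s) * enorm (ybar K.+1 - s)) <= dot (H s) (ybar K.+1 - s).
    have := cauchy_schwarz (- H s) (ybar K.+1 - s).
    rewrite dotNl.
    have -> : enorm (- H s) = enorm (H s) by rewrite /enorm dotNl dotNr opprK.
    lra.
  have h1 : enorm (H s) * enorm (ybar K.+1 - s) <= BHv * enorm (ybar K.+1 - s).
    by apply: ler_wpM2r; [apply: enorm_ge0 | apply: BHge].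
  have h2 : BHv * enorm (ybar K.+1 - s) <= BHv * dd + BHv * d.
    by rewrite -mulrDr; apply: ler_wpM2l => //; apply: ltW.
  have h4 : BHv * d <= e.
    rewrite /d mulrA ler_pdivrMr ?ltr_wpDl // mulrC ler_wpM2l ?ltW //.
    lra.
  have -> : - BHv * dd = - (BHv * dd) by rewrite mulNr.
  lra.
split.
  move=> K; case: K => [//|K] _.
  have up : Gap (ybar K.+1) X F <= (gamma^-1 * eta 0%N * DX2 X + CM * \sum_(j < K.+1) eta j ^+ 2 * theta j)
      / \sum_(j < K.+1) eta j * theta j.
    exact: (sup_img_le X (fun z => dot (F z) (ybar K.+1 - z)) _ X0 (pt1 K)).
  split => //.
  have := sup_img_ge X (fun z => dot (F z) (ybar K.+1 - z)) _ (ybar K.+1) (pt1 K) (Xyb K.+1).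
  by rewrite /= subrr dot0r.
move=> hinf hrat.
set A := gamma^-1 * eta 0%N * DX2 X.
set B := gamma^-1 * DX2 X.
have A0 : 0 <= A by rewrite /A !mulr_ge0 // ?invr_ge0 ltW.
have B0 : 0 <= B by rewrite /B mulr_ge0 // ?invr_ge0 ltW.
pose Sk := fun k => \sum_(j < k.+1) eta j * theta j.
pose Qk := fun k => \sum_(j < k.+1) eta j ^+ 2 * theta j.
have hcv : forall d, 0 < d -> exists N, forall k, (N <= k)%N ->
    (A + CM * Qk k) / Sk k <= d /\ B / Sk k <= d.
  move=> d d0.
  have := (proj1 (cvgryPgt _) hinf) (2 * (A + B) / d).
  case=> N1 _ hN1.
  have e0 : 0 < d / (2 * (CM + 1)) by rewrite divr_gt0 // mulr_gt0 // ltr_wpDl.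
  have := (proj1 (cvgr0Pnorm_lt _) hrat) _ e0.
  case=> N2 _ hN2.
  exists (maxn N1 N2) => k hk.
  have k1 : (N1 <= k)%N by apply: leq_trans hk; apply: leq_maxl.
  have k2 : (N2 <= k)%N by apply: leq_trans hk; apply: leq_maxr.
  have hS := hN1 k k1. have hQ := hN2 k k2.
  rewrite /= in hS hQ.
  have Sp := sumpos k.
  rewrite -/(Sk k) in hS Sp.
  rewrite -/(Sk k) -/(Qk k) in hQ.
  have hS' : 2 * (A + B) < d * Sk k.
    move: hS; rewrite ltr_pdivrMr //; lra.
  have hA : A / Sk k <= d / 2.
    by rewrite ler_pdivrMr //; lra.
  have hB : B / Sk k <= d.
    by rewrite ler_pdivrMr //; lra.
  split => //.
  have hq : CM * (Qk k / Sk k) <= d / 2.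
    have h1 : CM * (Qk k / Sk k) <= CM * `|Qk k / Sk k|.
      by apply: ler_wpM2l => //; apply: ler_norm.
    have h2 : CM * `|Qk k / Sk k| <= CM * (d / (2 * (CM + 1))).
      by apply: ler_wpM2l => //; apply: ltW.
    have h3 : CM * (d / (2 * (CM + 1))) <= d / 2.
      rewrite mulrA ler_pdivrMr ?mulr_gt0 ?ltr_wpDl //.
      have -> : d / 2 * (2 * (CM + 1)) = d * (CM + 1) by field.
      rewrite mulrC; apply: ler_wpM2l; [exact: ltW | lra].
    exact: le_trans h1 (le_trans h2 h3).
  rewrite mulrDl -(mulrA CM); lra.
have [xs [hxs hconv]] := iii_abs X F H LF LH muH M (fun k => ybar k.+1)
  (fun k => (A + CM * Qk k) / Sk k) (fun k => B / Sk k)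
  clX cX bM LipF monF LipH smH mu0 (fun k => Xyb k.+1)
  (fun k z hz => pt1 k z hz) (fun k z hz => pt2 k z hz) hcv.
exists xs; split => //.
apply/cvgr0Pnorm_lt => eps eps0.
have [N hN] := hconv eps eps0.
exists N.+1 => // k /= Nk.
rewrite ger0_norm ?enorm_ge0 //.
by case: k Nk => [//|k] Nk; apply: hN.
Qed.
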